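(* If $H\in\mathcal{H}_-$, then $H_{L_H^{**}}(x,y)\le -H_{L_H^{**}}(y,x)$ for all $x,y\in\bar\Omega$; that is, the restriction of $H_{L_H^{**}}$ to $\bar\Omega\times\bar\Omega$ belongs to $\mathcal{H}_-$.
   Context: $\Omega\subset\mathbb{R}^N$ is a bounded domain with $\bar\Omega\subset B_R$, the ball of radius $R>0$ centered at the origin. $\mathcal{H}_-$ is the set of continuous $H$ on $\bar\Omega\times\bar\Omega$ with $H(x,y)\le -H(y,x)$ for all $x,y$. For such $H$: $L_H(x,p)=\sup_{y\in\bar\Omega}\{\langle y,p\rangle-H(y,x)\}$; $L_H^*(q,y)=\sup_{x\in\bar\Omega,\,p\in B_R}\{\langle y,p\rangle+\langle q,x\rangle-L_H(x,p)\}$; $L_H^{**}(y,q)=\sup_{x\in\bar\Omega,\,p\in B_R}\{\langle y,p\rangle+\langle q,x\rangle-L_H^*(p,x)\}$. For a function $L$ on $\mathbb{R}^N\times\mathbb{R}^N$, $H_L(x,y)=\sup_{p\in B_R}\{\langle x,p\rangle-L(y,p)\}$. *)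

(* Defs.v *)
From Stdlib Require Import Reals ClassicalEpsilon Classical.
Open Scope R_scope.

(* Vectors of R^N: functions nat -> R vanishing from index N on. *)
Definition vec (N : nat) := {x : nat -> R | forall i, (N <= i)%nat -> x i = 0}.
Definition coord {N : nat} (x : vec N) : nat -> R := proj1_sig x.

Fixpoint rsum (n : nat) (f : nat -> R) : R :=
  match n with O => 0 | S k => rsum k f + f k end.

Definition inner {N : nat} (x y : vec N) : R :=
  rsum N (fun i => coord x i * coord y i).
Definition vnorm {N : nat} (x : vec N) : R := sqrt (inner x x).
Definition vdist {N : nat} (x y : vec N) : R :=
  sqrt (rsum N (fun i => (coord x i - coord y i) ^ 2)).

Definition in_ball {N : nat} (r : R) (p : vec N) : Prop := vnorm p < r.

Definition closure {N : nat} (S : vec N -> Prop) (x : vec N) : Prop :=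
  forall eps, 0 < eps -> exists y, S y /\ vdist x y < eps.
Definition is_open {N : nat} (S : vec N -> Prop) : Prop :=
  forall x, S x -> exists eps, 0 < eps /\ forall y, vdist y x < eps -> S y.
Definition is_connected {N : nat} (S : vec N -> Prop) : Prop :=
  ~ (exists U V : vec N -> Prop, is_open U /\ is_open V /\
       (forall x, S x -> U x \/ V x) /\
       (exists x, S x /\ U x) /\ (exists x, S x /\ V x) /\
       (forall x, S x -> U x -> V x -> False)).
Definition is_bounded {N : nat} (S : vec N -> Prop) : Prop :=
  exists M, forall x, S x -> vnorm x <= M.
Definition is_domain {N : nat} (S : vec N -> Prop) : Prop :=
  (exists x, S x) /\ is_open S /\ is_connected S.

(* Supremum of a set of reals (real-valued; all sups in this statement are
   of nonempty bounded-above sets; default 0 otherwise). *)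
Definition Rsup (E : R -> Prop) : R :=
  match excluded_middle_informative (bound E) with
  | left Hb =>
      match excluded_middle_informative (exists x, E x) with
      | left He => proj1_sig (completeness E Hb He)
      | right _ => 0
      end
  | right _ => 0
  end.

Definition cont_on_cl2 {N : nat} (Om : vec N -> Prop) (H : vec N -> vec N -> R) : Prop :=
  forall x y, closure Om x -> closure Om y ->
  forall eps, 0 < eps -> exists d, 0 < d /\
    forall x' y', closure Om x' -> closure Om y' ->
      vdist x x' < d -> vdist y y' < d -> Rabs (H x' y' - H x y) < eps.

Definition in_Hminus {N : nat} (Om : vec N -> Prop) (H : vec N -> vec N -> R) : Prop :=
  cont_on_cl2 Om H /\
  forall x y, closure Om x -> closure Om y -> H x y <= - H y x.

Definition L_H {N : nat} (Om : vec N -> Prop) (H : vec N -> vec N -> R)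
  (x p : vec N) : R :=
  Rsup (fun v => exists y, closure Om y /\ v = inner y p - H y x).

Definition L_H_star {N : nat} (Rad : R) (Om : vec N -> Prop) (H : vec N -> vec N -> R)
  (q y : vec N) : R :=
  Rsup (fun v => exists x p, closure Om x /\ in_ball Rad p /\
          v = inner y p + inner q x - L_H Om H x p).

Definition L_H_star2 {N : nat} (Rad : R) (Om : vec N -> Prop) (H : vec N -> vec N -> R)
  (y q : vec N) : R :=
  Rsup (fun v => exists x p, closure Om x /\ in_ball Rad p /\
          v = inner y p + inner q x - L_H_star Rad Om H p x).

Definition H_L {N : nat} (Rad : R) (L : vec N -> vec N -> R) (x y : vec N) : R :=
  Rsup (fun v => exists p, in_ball Rad p /\ v = inner x p - L y p).

(* Main.v *)
Require Import Defs.
From Stdlib Require Import Reals Lra Lia Psatz ClassicalEpsilon Classical Arith Compare_dec.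
Open Scope R_scope.

Lemma Rsup_ub (E : R -> Prop) v : bound E -> E v -> v <= Rsup E.
Proof.
  intros Hb0 Hv. unfold Rsup.
  destruct (excluded_middle_informative (bound E)) as [Hb|Hb]; [|contradiction].
  destruct (excluded_middle_informative (exists x, E x)) as [He|He]; [|exfalso; eauto].
  destruct (completeness E Hb He) as [s [Hs1 Hs2]]; simpl. apply Hs1; auto.
Qed.

Lemma Rsup_le (E : R -> Prop) M : (exists x, E x) -> (forall v, E v -> v <= M) -> Rsup E <= M.
Proof.
  intros He0 HM. unfold Rsup.
  destruct (excluded_middle_informative (bound E)) as [Hb|Hb];
    [|exfalso; apply Hb; exists M; exact HM].
  destruct (excluded_middle_informative (exists x, E x)) as [He|He]; [|contradiction].
  destruct (completeness E Hb He) as [s [Hs1 Hs2]]; simpl. apply Hs2. exact HM.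
Qed.

Lemma rsum_ext n f g : (forall i, (i < n)%nat -> f i = g i) -> rsum n f = rsum n g.
Proof. induction n; simpl; intros H; auto. rewrite IHn by (intros; apply H; lia). rewrite H by lia. auto. Qed.

Lemma rsum_le n f g : (forall i, (i < n)%nat -> f i <= g i) -> rsum n f <= rsum n g.
Proof. induction n; simpl; intros H; [lra|]. assert (rsum n f <= rsum n g) by (apply IHn; intros; apply H; lia).
  assert (f n <= g n) by (apply H; lia). lra. Qed.

Lemma rsum_const n c : rsum n (fun _ => c) = INR n * c.
Proof. induction n; simpl rsum; [simpl; ring|]. rewrite IHn, S_INR. ring. Qed.

Lemma rsum_nonneg n f : (forall i, (i < n)%nat -> 0 <= f i) -> 0 <= rsum n f.
Proof. intros H. replace 0 with (rsum n (fun _ => 0)). apply rsum_le; auto.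
  rewrite rsum_const; ring. Qed.

Lemma rsum_plus n f g : rsum n (fun i => f i + g i) = rsum n f + rsum n g.
Proof. induction n; simpl; [ring|]. rewrite IHn; ring. Qed.

Lemma term_le_rsum n f i : (forall j, (j < n)%nat -> 0 <= f j) -> (i < n)%nat -> f i <= rsum n f.
Proof. induction n; intros H Hi; [lia|]. simpl.
  assert (0 <= rsum n f) by (apply rsum_nonneg; intros; apply H; lia).
  destruct (Nat.eq_dec i n) as [->|Hne]. lra.
  assert (f i <= rsum n f) by (apply IHn; [intros; apply H; lia| lia]).
  assert (0 <= f n) by (apply H; lia). lra. Qed.

Lemma rsum_abs n f : Rabs (rsum n f) <= rsum n (fun i => Rabs (f i)).
Proof. induction n; simpl. rewrite Rabs_R0; lra.
  eapply Rle_trans; [apply Rabs_triang|]. lra. Qed.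

Lemma rsum_sq_le n f : rsum n (fun i => f i ^ 2) <= (rsum n (fun i => Rabs (f i))) ^ 2.
Proof. induction n; cbn [rsum]; [lra|].
  assert (0 <= rsum n (fun i => Rabs (f i))) by (apply rsum_nonneg; intros; apply Rabs_pos).
  assert (f n ^ 2 = Rabs (f n) ^ 2) by (unfold Rabs; destruct Rcase_abs; ring).
  pose proof (Rabs_pos (f n)). nra. Qed.

Lemma coord_bound N Rad (x : vec N) : 0 < Rad -> in_ball Rad x -> forall i, Rabs (coord x i) <= Rad.
Proof.
  intros HR Hb i. destruct (lt_dec i N) as [Hi|Hi].
  - unfold in_ball, vnorm, inner in Hb.
    assert (coord x i * coord x i <= rsum N (fun j => coord x j * coord x j))
      by (apply (term_le_rsum N (fun j => coord x j * coord x j)); auto; intros; apply Rle_0_sqr).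
    rewrite <- sqrt_Rsqr_abs. unfold Rsqr.
    apply Rlt_le, Rle_lt_trans with (2 := Hb). apply sqrt_le_1_alt; auto.
  - unfold coord. rewrite (proj2_sig x i) by lia. rewrite Rabs_R0; lra.
Qed.

Lemma inner_bound N Rad (a b : vec N) : (forall i, Rabs (coord a i) <= Rad) -> (forall i, Rabs (coord b i) <= Rad) ->
  Rabs (inner a b) <= INR N * (Rad * Rad).
Proof.
  intros Ha Hb. unfold inner. eapply Rle_trans; [apply rsum_abs|].
  rewrite <- rsum_const. apply rsum_le. intros i _. rewrite Rabs_mult.
  apply Rmult_le_compat; auto using Rabs_pos.
Qed.

Lemma inner_comm N (a b : vec N) : inner a b = inner b a.
Proof. unfold inner. apply rsum_ext. intros; ring. Qed.

Definition d1 {N} (a b : vec N) := rsum N (fun i => Rabs (coord a i - coord b i)).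

Lemma vdist_le_d1 N (a b : vec N) : vdist a b <= d1 a b.
Proof.
  unfold vdist, d1. rewrite <- (sqrt_pow2 (rsum N (fun i => Rabs (coord a i - coord b i)))).
  apply sqrt_le_1_alt. apply (rsum_sq_le N (fun i => coord a i - coord b i)).
  apply rsum_nonneg; intros; apply Rabs_pos.
Qed.

Lemma coord_le_vdist N (a b : vec N) i : (i < N)%nat -> Rabs (coord a i - coord b i) <= vdist a b.
Proof.
  intros Hi. unfold vdist. rewrite <- sqrt_Rsqr_abs. apply sqrt_le_1_alt.
  unfold Rsqr. replace ((coord a i - coord b i) * (coord a i - coord b i)) with ((coord a i - coord b i)^2) by ring.
  apply (term_le_rsum N (fun j => (coord a j - coord b j)^2)); auto. intros; apply pow2_ge_0.
Qed.

Lemma d1_le_vdist N (a b : vec N) : d1 a b <= INR N * vdist a b.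
Proof. unfold d1. rewrite <- rsum_const. apply rsum_le. intros; apply coord_le_vdist; auto. Qed.

Lemma d1_triang N (a b c : vec N) : d1 a c <= d1 a b + d1 b c.
Proof. unfold d1. rewrite <- rsum_plus. apply rsum_le. intros.
  replace (coord a i - coord c i) with ((coord a i - coord b i) + (coord b i - coord c i)) by ring.
  apply Rabs_triang. Qed.

Lemma d1_sym N (a b : vec N) : d1 a b = d1 b a.
Proof. unfold d1. apply rsum_ext. intros; apply Rabs_minus_sym. Qed.

Lemma d1_nonneg N (a b : vec N) : 0 <= d1 a b.
Proof. apply rsum_nonneg; intros; apply Rabs_pos. Qed.

Lemma incr_lt (f : nat -> nat) : (forall n, (f n < f (S n))%nat) -> forall m n, (m < n)%nat -> (f m < f n)%nat.
Proof. intros Hf m n Hmn. induction Hmn. apply Hf. specialize (Hf m0). lia. Qed.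

Lemma incr_ge (f : nat -> nat) : (forall n, (f n < f (S n))%nat) -> forall n, (n <= f n)%nat.
Proof. intros Hf n. induction n. lia. specialize (Hf n). lia. Qed.

Lemma cv_sub v l (psi : nat -> nat) : (forall n, (psi n < psi (S n))%nat) -> Un_cv v l -> Un_cv (fun n => v (psi n)) l.
Proof. intros Hp Hc eps He. destruct (Hc eps He) as [N0 HN]. exists N0. intros n Hn.
  apply HN. pose proof (incr_ge psi Hp n). lia. Qed.

Fixpoint build (g : nat -> nat -> nat) (k : nat) : nat :=
  match k with O => g O O | S k' => g k (S (build g k')) end.

Lemma extract1 (u : nat -> R) M : (forall n, Rabs (u n) <= M) ->
  exists phi : nat -> nat, (forall n, (phi n < phi (S n))%nat) /\ exists l, Un_cv (fun n => u (phi n)) l.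
Proof.
  intros HM.
  destruct (Bolzano_Weierstrass u (fun c => -M <= c <= M) (compact_P3 (-M) M)) as [l Hl].
  { intros n. specialize (HM n). unfold Rabs in HM; destruct (Rcase_abs (u n)); lra. }
  assert (G : forall k n : nat, {p : nat | (n <= p)%nat /\ Rabs (u p - l) < / INR (S k)}).
  { intros k n. apply constructive_indefinite_description.
    assert (Hpos : 0 < / INR (S k)) by (apply Rinv_0_lt_compat, lt_0_INR; lia).
    destruct (Hl (disc l (mkposreal _ Hpos)) n) as [p [Hp1 Hp2]].
    - exists (mkposreal _ Hpos). intros y Hy; exact Hy.
    - exists p. split; auto. }
  set (g := fun k n => proj1_sig (G k n)).
  assert (Hg : forall k n, (n <= g k n)%nat /\ Rabs (u (g k n) - l) < / INR (S k)).
  { intros k n. unfold g. destruct (G k n); simpl; auto. }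
  exists (build g). split.
  - intros n. simpl. destruct (Hg (S n) (S (build g n))). lia.
  - exists l. intros eps He.
    destruct (INR_unbounded (/ eps)) as [K HK].
    exists K. intros n Hn. unfold R_dist.
    assert (Hb : Rabs (u (build g n) - l) < / INR (S n)).
    { destruct n; simpl; apply Hg. }
    eapply Rlt_le_trans; [exact Hb|].
    assert (INR K <= INR (S n)) by (apply le_INR; lia).
    assert (0 < INR K).
    { assert (0 < / eps) by (apply Rinv_0_lt_compat; lra). lra. }
    rewrite <- (Rinv_inv eps). apply Rinv_le_contravar. apply Rinv_0_lt_compat; lra. lra.
Qed.

Lemma extract (k : nat) (u : nat -> nat -> R) M : (forall n i, Rabs (u n i) <= M) ->
  exists phi : nat -> nat, (forall n, (phi n < phi (S n))%nat) /\
  exists l : nat -> R, forall i, (i < k)%nat -> Un_cv (fun n => u (phi n) i) (l i).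
Proof.
  intros HM. induction k.
  - exists (fun n => n). split; [intros; lia|]. exists (fun _ => 0). intros; lia.
  - destruct IHk as [phi [Hphi [l Hl]]].
    destruct (extract1 (fun n => u (phi n) k) M) as [psi [Hpsi [lk Hlk]]]; [intros; apply HM|].
    exists (fun n => phi (psi n)). split.
    + intros n. apply incr_lt; auto.
    + exists (fun i => if Nat.eq_dec i k then lk else l i). intros i Hi.
      destruct (Nat.eq_dec i k) as [->|Hne].
      * exact Hlk.
      * apply (cv_sub (fun n => u (phi n) i) (l i) psi Hpsi). apply Hl; lia.
Qed.

Lemma unif_cv (k : nat) (w : nat -> nat -> R) (l : nat -> R) :
  (forall i, (i < k)%nat -> Un_cv (w i) (l i)) ->
  forall eps, 0 < eps -> exists N0, forall n, (N0 <= n)%nat -> forall i, (i < k)%nat -> Rabs (w i n - l i) < eps.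
Proof.
  induction k; intros Hc eps He.
  - exists O. intros; lia.
  - destruct (IHk (fun i Hi => Hc i ltac:(lia)) eps He) as [N1 HN1].
    destruct (Hc k ltac:(lia) eps He) as [N2 HN2].
    exists (max N1 N2). intros n Hn i Hi.
    destruct (Nat.eq_dec i k) as [->|Hne].
    + apply HN2; lia.
    + apply HN1; lia.
Qed.

Definition mkvec (N : nat) (l : nat -> R) : vec N.
Proof. exists (fun i => if lt_dec i N then l i else 0). intros i Hi. destruct (lt_dec i N); [lia|reflexivity]. Defined.

Lemma coord_mkvec N l i : (i < N)%nat -> coord (mkvec N l) i = l i.
Proof. intros Hi. unfold coord, mkvec; simpl. destruct (lt_dec i N); [reflexivity|lia]. Qed.

Lemma vec_cv N (v : nat -> vec N) l : (forall i, (i < N)%nat -> Un_cv (fun n => coord (v n) i) (l i)) ->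
  forall eps, 0 < eps -> exists N0, forall n, (N0 <= n)%nat -> d1 (mkvec N l) (v n) < eps.
Proof.
  intros Hc eps He.
  assert (HN : 0 < INR N + 1) by (pose proof (pos_INR N); lra).
  set (e' := eps / (INR N + 1)).
  assert (He' : 0 < e') by (unfold e'; apply Rdiv_lt_0_compat; lra).
  destruct (unif_cv N (fun i n => coord (v n) i) l Hc e' He') as [N0 HN0].
  exists N0. intros n Hn.
  apply Rle_lt_trans with (INR N * e').
  - unfold d1. rewrite <- rsum_const. apply rsum_le. intros i Hi.
    rewrite coord_mkvec by auto. rewrite Rabs_minus_sym. left. apply (HN0 n Hn i Hi).
  - assert (eps = e' * (INR N + 1)) by (unfold e'; field; lra). nra.
Qed.

Lemma cl_limit N (Om : vec N -> Prop) (v : nat -> vec N) L : (forall n, closure Om (v n)) ->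
  (forall eps, 0 < eps -> exists n, d1 L (v n) < eps) -> closure Om L.
Proof.
  intros Hv Hc eps He.
  assert (HN : 0 < INR N + 1) by (pose proof (pos_INR N); lra).
  destruct (Hc (eps / 2)) as [n Hn]; [lra|].
  destruct (Hv n (eps / 2 / (INR N + 1))) as [y [Hy Hd]].
  { apply Rdiv_lt_0_compat; lra. }
  exists y. split; auto.
  apply Rle_lt_trans with (d1 L y); [apply vdist_le_d1|].
  eapply Rle_lt_trans; [apply (d1_triang _ L (v n) y)|].
  pose proof (d1_le_vdist N (v n) y). pose proof (pos_INR N).
  assert (INR N * vdist (v n) y <= (INR N + 1) * vdist (v n) y).
  { pose proof (sqrt_pos (rsum N (fun i => (coord (v n) i - coord y i) ^ 2))). unfold vdist. nra. }
  assert ((INR N + 1) * vdist (v n) y < eps / 2).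
  { apply Rmult_lt_reg_l with (/ (INR N + 1)). apply Rinv_0_lt_compat; lra.
    rewrite <- Rmult_assoc, Rinv_l by lra. unfold Rdiv in *. lra. }
  lra.
Qed.

Lemma H_bounded_below N Rad (Om : vec N -> Prop) (H : vec N -> vec N -> R) :
  0 < Rad -> (forall x, closure Om x -> in_ball Rad x) -> cont_on_cl2 Om H ->
  exists M, forall x y, closure Om x -> closure Om y -> - M <= H x y.
Proof.
  intros HR Hball Hcont. apply NNPP. intros Hno.
  assert (G : forall n : nat, {xy : vec N * vec N | closure Om (fst xy) /\ closure Om (snd xy) /\ H (fst xy) (snd xy) < - INR n}).
  { intros n. apply constructive_indefinite_description.
    destruct (classic (exists xy : vec N * vec N, closure Om (fst xy) /\ closure Om (snd xy) /\ H (fst xy) (snd xy) < - INR n)) as [E|E]; auto.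
    exfalso. apply Hno. exists (INR n). intros x y Hx Hy. apply Rnot_lt_le. intros Hlt.
    apply E. exists (x, y). simpl; auto. }
  set (a := fun n => fst (proj1_sig (G n))).
  set (b := fun n => snd (proj1_sig (G n))).
  assert (Hab : forall n, closure Om (a n) /\ closure Om (b n) /\ H (a n) (b n) < - INR n).
  { intros n. unfold a, b. destruct (G n); simpl; auto. }
  destruct (extract N (fun n i => coord (a n) i) Rad) as [phi [Hphi [la Hla]]].
  { intros n i. apply coord_bound; auto. apply Hball, Hab. }
  destruct (extract N (fun n i => coord (b (phi n)) i) Rad) as [psi [Hpsi [lb Hlb]]].
  { intros n i. apply coord_bound; auto. apply Hball, Hab. }
  set (chi := fun n => phi (psi n)).
  assert (Hchi : forall n, (chi n < chi (S n))%nat) by (intros; unfold chi; apply incr_lt; auto).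
  assert (Ca : forall eps, 0 < eps -> exists N0, forall n, (N0 <= n)%nat -> d1 (mkvec N la) (a (chi n)) < eps).
  { apply (vec_cv N (fun n => a (chi n))). intros i Hi.
    apply (cv_sub (fun n => coord (a (phi n)) i) (la i) psi Hpsi). apply Hla; auto. }
  assert (Cb : forall eps, 0 < eps -> exists N0, forall n, (N0 <= n)%nat -> d1 (mkvec N lb) (b (chi n)) < eps).
  { apply (vec_cv N (fun n => b (chi n))). intros i Hi. apply Hlb; auto. }
  assert (ClA : closure Om (mkvec N la)).
  { apply (cl_limit N Om (fun n => a (chi n))). intros; apply Hab.
    intros eps He. destruct (Ca eps He) as [N0 HN0]. exists N0. apply HN0; lia. }
  assert (ClB : closure Om (mkvec N lb)).
  { apply (cl_limit N Om (fun n => b (chi n))). intros; apply Hab.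
    intros eps He. destruct (Cb eps He) as [N0 HN0]. exists N0. apply HN0; lia. }
  destruct (Hcont _ _ ClA ClB 1 Rlt_0_1) as [d [Hd Hdd]].
  destruct (Ca d Hd) as [N1 HN1]. destruct (Cb d Hd) as [N2 HN2].
  destruct (INR_unbounded (1 - H (mkvec N la) (mkvec N lb))) as [K HK].
  set (n := max K (max N1 N2)).
  assert (Hclose : Rabs (H (a (chi n)) (b (chi n)) - H (mkvec N la) (mkvec N lb)) < 1).
  { apply Hdd; try apply Hab.
    - eapply Rle_lt_trans; [apply vdist_le_d1|]. apply HN1. unfold n; lia.
    - eapply Rle_lt_trans; [apply vdist_le_d1|]. apply HN2. unfold n; lia. }
  destruct (Hab (chi n)) as [_ [_ Hlt]].
  assert (INR K <= INR (chi n)) by (apply le_INR; pose proof (incr_ge chi Hchi n); unfold n in *; lia).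
  unfold Rabs in Hclose. destruct Rcase_abs in Hclose; lra.
Qed.

Theorem lemma2p4 (N : nat) (Rad : R) (Om : vec N -> Prop) (H : vec N -> vec N -> R) :
  0 < Rad ->
  is_domain Om -> is_bounded Om ->
  (forall x, closure Om x -> in_ball Rad x) ->
  in_Hminus Om H ->
  forall x y, closure Om x -> closure Om y ->
    H_L Rad (L_H_star2 Rad Om H) x y <= - H_L Rad (L_H_star2 Rad Om H) y x.
Proof.
  intros HR _ _ Hball [Hcont Hanti].
  destruct (H_bounded_below N Rad Om H HR Hball Hcont) as [M HM].
  set (C := INR N * (Rad * Rad)).
  assert (ib : forall a b : vec N, in_ball Rad a -> in_ball Rad b -> Rabs (inner a b) <= C).
  { intros a b Ha Hb. apply inner_bound; apply coord_bound; auto. }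
  assert (ibl : forall a b : vec N, in_ball Rad a -> in_ball Rad b -> - C <= inner a b <= C).
  { intros a b Ha Hb. specialize (ib a b Ha Hb). unfold Rabs in ib; destruct Rcase_abs in ib; lra. }
  set (L := L_H Om H). set (S := L_H_star Rad Om H). set (D := L_H_star2 Rad Om H).
  assert (L_ge : forall x' p z, closure Om x' -> in_ball Rad p -> closure Om z ->
             inner z p - H z x' <= L x' p).
  { intros x' p z Hx Hp Hz. unfold L, L_H. apply Rsup_ub.
    - exists (C + M). intros v [w [Hw ->]].
      pose proof (ibl w p (Hball _ Hw) Hp). pose proof (HM w x' Hw Hx). lra.
    - exists z; auto. }
  assert (L_le : forall x' p, closure Om x' -> in_ball Rad p -> L x' p <= C + M).
  { intros x' p Hx Hp. unfold L, L_H. apply Rsup_le.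
    - exists (inner x' p - H x' x'). exists x'; auto.
    - intros v [w [Hw ->]].
      pose proof (ibl w p (Hball _ Hw) Hp). pose proof (HM w x' Hw Hx). lra. }
  assert (S_elem : forall p' x' x'' p'', in_ball Rad p' -> closure Om x' -> closure Om x'' -> in_ball Rad p'' ->
             inner x' p'' + inner p' x'' - L x'' p'' <= L x' p').
  { intros p' x' x'' p'' Hp' Hx' Hx'' Hp''.
    pose proof (L_ge x'' p'' x' Hx'' Hp'' Hx').
    pose proof (L_ge x' p' x'' Hx' Hp' Hx'').
    pose proof (Hanti x' x'' Hx' Hx''). rewrite (inner_comm _ p' x''). lra. }
  assert (S_le : forall p' x', in_ball Rad p' -> closure Om x' -> S p' x' <= L x' p').
  { intros p' x' Hp Hx. unfold S, L_H_star. apply Rsup_le.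
    - exists (inner x' p' + inner p' x' - L_H Om H x' p'). exists x', p'; auto.
    - intros v [x'' [p'' [Hx'' [Hp'' ->]]]]. apply S_elem; auto. }
  assert (S_ge : forall p' x', in_ball Rad p' -> closure Om x' -> - (3 * C + M) <= S p' x').
  { intros p' x' Hp Hx.
    assert (inner x' p' + inner p' x' - L x' p' <= S p' x').
    { unfold S, L_H_star. apply Rsup_ub.
      - exists (C + M). intros v [x'' [p'' [Hx'' [Hp'' ->]]]].
        pose proof (S_elem p' x' x'' p'' Hp Hx Hx'' Hp''). pose proof (L_le x' p' Hx Hp). unfold L in *. lra.
      - exists x', p'; auto. }
    pose proof (ibl x' p' (Hball _ Hx) Hp). pose proof (ibl p' x' Hp (Hball _ Hx)).
    pose proof (L_le x' p' Hx Hp). lra. }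
  assert (D_ge : forall y q x' p', closure Om y -> in_ball Rad q -> closure Om x' -> in_ball Rad p' ->
             inner y p' + inner q x' - S p' x' <= D y q).
  { intros y0 q x' p' Hy Hq Hx Hp. unfold D, L_H_star2. apply Rsup_ub.
    - exists (C + C + (3 * C + M)). intros v [x'' [p'' [Hx'' [Hp'' ->]]]].
      pose proof (ibl y0 p'' (Hball _ Hy) Hp''). pose proof (ibl q x'' Hq (Hball _ Hx'')).
      pose proof (S_ge p'' x'' Hp'' Hx''). unfold S in *. lra.
    - exists x', p'; auto. }
  assert (S_le_D : forall x q, closure Om x -> in_ball Rad q -> S q x <= D x q).
  { intros x0 q Hx Hq. unfold S at 1, L_H_star. apply Rsup_le.
    - exists (inner x0 q + inner q x0 - L_H Om H x0 q). exists x0, q; auto.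
    - intros v [x'' [p'' [Hx'' [Hp'' ->]]]].
      pose proof (S_le p'' x'' Hp'' Hx''). pose proof (D_ge x0 q x'' p'' Hx Hq Hx'' Hp'').
      unfold L in *. lra. }
  assert (Key : forall x y p q, closure Om x -> closure Om y -> in_ball Rad p -> in_ball Rad q ->
             (inner x p - D y p) + (inner y q - D x q) <= 0).
  { intros x0 y0 p q Hx Hy Hp Hq.
    pose proof (D_ge y0 p x0 q Hy Hp Hx Hq). pose proof (S_le_D x0 q Hx Hq).
    rewrite (inner_comm _ p x0) in *. lra. }
  intros x y Hx Hy.
  assert (Hb0 : in_ball Rad (mkvec N (fun _ => 0))).
  { unfold in_ball, vnorm, inner. rewrite (rsum_ext N _ (fun _ => 0)).
    rewrite rsum_const, Rmult_0_r, sqrt_0. auto.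
    intros i Hi. rewrite coord_mkvec by auto. ring. }
  unfold H_L. fold D.
  assert (HA : forall b, (exists q, in_ball Rad q /\ b = inner y q - D x q) ->
            Rsup (fun v => exists p, in_ball Rad p /\ v = inner x p - D y p) <= - b).
  { intros b [q [Hq ->]]. apply Rsup_le.
    - exists (inner x (mkvec N (fun _ => 0)) - D y (mkvec N (fun _ => 0))). eexists; eauto.
    - intros v [p [Hp ->]]. pose proof (Key x y p q Hx Hy Hp Hq). lra. }
  assert (Rsup (fun v => exists p, in_ball Rad p /\ v = inner y p - D x p) <=
          - Rsup (fun v => exists p, in_ball Rad p /\ v = inner x p - D y p)).
  { apply Rsup_le.
    - exists (inner y (mkvec N (fun _ => 0)) - D x (mkvec N (fun _ => 0))). eexists; eauto.
    - intros v Hv. pose proof (HA v Hv). lra. }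
  lra.
Qed.
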